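(* Let $r(\cdot)\in\mathcal{P}^{\log}(\mathbb{R})$ with $r(x)=2$ for all $x\in[0,1]$ and $r^-_{[0,16]}>1$. Then the kernel $K(x,y)=K_1(x-y)K_2(y)$ belongs to $H_{r(\cdot),1}$.
   Context: Here $n=1$. Fix $\beta>0$; $K_1(t)=\chi_{[2,3]}(t)$ and $K_2(t)=t^{-1/2}\big[\log(e/t)\big]^{-\frac{1+\beta}{2}}\chi_{(0,1)}(t)$. Cubes are intervals $Q$; $mQ$ is the concentric interval of length $m\ell(Q)$. $\|f\|_{p(\cdot)}=\inf\{\lambda>0:\int_{\{p<\infty\}}|f/\lambda|^{p(x)}dx+\|(f/\lambda)\chi_{\{p=\infty\}}\|_\infty\le1\}$ for measurable $p(\cdot):\mathbb{R}\to[1,\infty]$. $\mathcal{P}^{\log}(\mathbb{R})$: $1/p$ satisfies $|1/p(x)-1/p(y)|\le c_0/(-\log|x-y|)$ for $|x-y|<1/2$ and $|1/p(x)-1/p_\infty|\le c_\infty/\log(e+|x|)$. $r^-_E=\operatorname{ess\,inf}_Er$. $K\in H_{r(\cdot),1}$ means $\sup_Q\sup_{x,z\in\frac12Q}\sum_{m\ge1}2^m\ell(Q)\frac{\|[K(x,\cdot)-K(z,\cdot)]\chi_{2^mQ\setminus2^{m-1}Q}\|_{r(\cdot)}}{\|\chi_{2^mQ}\|_{r(\cdot)}}<\infty$. *)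

(* Defs.v *)
From HB Require Import structures.
From mathcomp Require Import all_boot all_order all_algebra.
From mathcomp Require Import all_classical all_reals all_analysis.
From mathcomp Require Import ess_sup_inf measurable_realfun.
Set Implicit Arguments. Unset Strict Implicit. Unset Printing Implicit Defensive.
Import Order.TTheory GRing.Theory Num.Def Num.Theory.
Import numFieldNormedType.Exports.
Local Open Scope classical_set_scope.
Local Open Scope ring_scope.

(* Variable exponents on R are functions p : R -> \bar R with values in [1, +oo]. *)

Section VarExp.
Variable R : realType.
Local Notation mu := (@lebesgue_measure R).

Definition inv_exp (q : \bar R) : R :=
  match q with EFin r => r^-1 | _ => 0 end.

Definition modular (p : R -> \bar R) (f : R -> R) (l : R) : \bar R :=
  ((\int[mu]_(x in [set x | p x < +oo]%E) ((`|f x| / l) `^ fine (p x))%:E)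
   + ess_sup mu (fun x => if p x == +oo%E then (`|f x| / l)%:E else 0%E))%E.

(* Luxemburg norm ||f||_{p(.)} (as an extended real, +oo if the set is empty) *)
Definition vnorm (p : R -> \bar R) (f : R -> R) : \bar R :=
  ereal_inf [set l%:E | l in [set l : R | 0 < l /\ (modular p f l <= 1)%E]].

Definition is_exponent (p : R -> \bar R) : Prop :=
  measurable_fun [set: R] p /\ forall x, (1 <= p x)%E.

Definition log_holder (p : R -> \bar R) : Prop :=
  is_exponent p /\
  (exists c0 : R, forall x y, `|x - y| < 1/2 ->
      `|inv_exp (p x) - inv_exp (p y)| <= c0 / (- ln `|x - y|)) /\
  (exists (pinf : \bar R) (cinf : R), (1 <= pinf)%E /\ forall x,
      `|inv_exp (p x) - inv_exp pinf| <= cinf / ln (expR 1 + `|x|)).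

Definition ess_inf_itv (r : R -> \bar R) (a b : R) : \bar R :=
  ess_inf (mrestr mu (measurable_itv `[a, b])) r.

Definition ind (A : set R) (x : R) : R := if `[< A x >] then 1 else 0.

Definition cube (c l : R) : set R := `[c - l / 2, c + l / 2].
Definition dil (m : R) (c l : R) : set R := cube c (m * l).

Definition in_H (r : R -> \bar R) (K : R -> R -> R) : Prop :=
  exists C : R, forall (c l : R), 0 < l -> forall x z,
    dil (1/2) c l x -> dil (1/2) c l z ->
    (\sum_(1 <= m <oo)
       ((2 ^+ m * l)%R%:E *
        vnorm r (fun y => ((K x y - K z y) *
                   ind (dil (2 ^+ m) c l `\` dil (2 ^+ m.-1) c l) y)%R)
        * ((fine (vnorm r (ind (dil (2 ^+ m)%R c l))))^-1)%:E) <= C%:E)%E.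

Definition K1 (t : R) : R := ind `[2, 3] t.
Definition K2 (beta : R) (t : R) : R :=
  if (0 < t) && (t < 1) then
    t `^ (- (1/2)) * (ln (expR 1 / t)) `^ (- ((1 + beta) / 2))
  else 0.
Definition Kker (beta : R) (x y : R) : R := K1 (x - y) * K2 beta y.

End VarExp.

(* Main.v *)
Require Import Defs.
From HB Require Import structures.
From mathcomp Require Import all_boot all_order all_algebra.
From mathcomp Require Import all_classical all_reals all_analysis.
From mathcomp Require Import ess_sup_inf measurable_realfun.
From mathcomp Require Import ring lra.
Import Order.TTheory GRing.Theory Num.Def Num.Theory.
Import numFieldNormedType.Exports.
Local Open Scope classical_set_scope.
Local Open Scope ring_scope.
Set Implicit Arguments. Unset Strict Implicit. Unset Printing Implicit Defensive.
Section S.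
Variable R : realType.
Local Notation mu := (@lebesgue_measure R).
Implicit Types (p : R -> \bar R) (f : R -> R).

Lemma vnorm_ge0 p f : (0 <= vnorm p f)%E.
Proof.
apply/ereal_infP => _ [l [l0 _] <-]; rewrite lee_fin; exact: ltW.
Qed.

Lemma vnorm_le p f l : 0 < l -> (modular p f l <= 1)%E -> (vnorm p f <= l%:E)%E.
Proof. by move=> l0 ml; apply: ereal_inf_lbound; exists l. Qed.

Lemma vnorm_ge p f a : (forall l, 0 < l -> l < a -> (1 < modular p f l)%E) ->
  (a%:E <= vnorm p f)%E.
Proof.
move=> H; apply/ereal_infP => _ [l [l0 ml] <-]; rewrite lee_fin leNgt.
apply/negP => la; have := H l l0 la; by rewrite ltNge ml.
Qed.

Lemma muT_gt0 : (0 < mu [set: R])%E.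
Proof.
have H : (mu (`[0%R, 1%R]%classic : set R) = 1)%E.
  by rewrite lebesgue_measure_itv/= lte_fin ltr01 sube0.
apply: (@lt_le_trans _ _ (mu (`[0%R, 1%R]%classic : set R))); first by rewrite H lte01.
by apply: le_measure; rewrite ?inE //; exact: measurable_itv.
Qed.

Lemma fine_ge1 p x : is_exponent p -> (p x < +oo)%E -> 1 <= fine (p x).
Proof.
move=> [_ p1] px; have := p1 x; case: (p x) px => //= [r _|]; by rewrite ?lee_fin.
Qed.

Lemma modular0 p f l : is_exponent p -> (forall x, f x = 0) -> 0 < l ->
  modular p f l = 0%E.
Proof.
move=> pe f0 l0; rewrite /modular.
rewrite (@eq_integral _ _ _ mu _ (cst 0%E)); last first.
  move=> x; rewrite inE /= => px; rewrite f0 normr0 mul0r powR0 //.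
  by apply/eqP => h; have := fine_ge1 pe px; rewrite h ler10.
rewrite integral0 add0e.
rewrite (_ : (fun x => _) = cst 0%E); last first.
  by apply/funext => x; rewrite f0 normr0 mul0r; case: ifP.
exact: ess_sup_cst (muT_gt0).
Qed.

Lemma vnorm0 p f : is_exponent p -> (forall x, f x = 0) -> vnorm p f = 0%E.
Proof.
move=> pe f0; apply/eqP; rewrite eq_le vnorm_ge0 andbT.
apply/lee_addgt0Pr => e e0; rewrite add0e.
by apply: vnorm_le => //; rewrite modular0.
Qed.

End S.
Section S2.
Variable R : realType.
Local Notation mu := (@lebesgue_measure R).

Definition gg (b t : R) : R := t `^ (-1) * (1 - ln t) `^ (- (1 + b)).
Definition FF (b t : R) : R := b^-1 * (1 - ln t) `^ (- b).

Lemma is_derive_comp1 (f g : R -> R) (x df dg : R) :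
  is_derive x 1 f df -> is_derive (f x) 1 g dg -> is_derive x 1 (g \o f) (dg * df).
Proof.
move=> hf hg; apply: DeriveDef.
  apply/derivable1_diffP; apply: differentiable_comp; apply/derivable1_diffP; exact: ex_derive.
rewrite -derive1E derive1_comp; [|exact: ex_derive|exact: ex_derive].
by rewrite !derive1E !derive_val.
Qed.

Lemma FF_derive b t : 0 < b -> 0 < t -> t < expR 1 -> is_derive t 1 (FF b) (gg b t).
Proof.
move=> b0 t0 te.
have u0 : 0 < 1 - ln t.
  by rewrite subr_gt0 -[X in _ < X](expRK 1) ltr_ln ?posrE ?expR_gt0.
have hi : is_derive t 1 (cst 1 - @ln R) (0 - t^-1).
  exact: is_deriveB (is_derive1_ln t0).
have ho := is_deriveZ b^-1 (is_derive1_powR (- b) u0).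
have E : FF b = (b^-1 \*: (@powR R ^~ (- b))) \o (cst 1 - @ln R) by apply/funext.
rewrite E; apply: is_derive_eq (is_derive_comp1 hi ho) _.
rewrite /gg.
rewrite /= powR_inv1 ?(ltW t0) // (_ : - b - 1 = - (1 + b)); last by ring.
have bn0 : b != 0 by rewrite gt_eqF.
rewrite /GRing.scale /=; field; by rewrite bn0 gt_eqF.
Qed.

Lemma ln_lt1 (t : R) : 0 < t -> t < expR 1 -> 0 < 1 - ln t.
Proof.
by move=> t0 te; rewrite subr_gt0 -[X in _ < X](expRK 1) ltr_ln ?posrE ?expR_gt0.
Qed.

Lemma gg_cont b t : 0 < t -> t < expR 1 -> {for t, continuous (gg b)}.
Proof.
move=> t0 te.
have hi : is_derive t 1 (cst 1 - @ln R) (0 - t^-1).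
  exact: is_deriveB (is_derive1_ln t0).
have hc := is_derive_comp1 hi (is_derive1_powR (- (1 + b)) (ln_lt1 t0 te)).
have hm := is_deriveM (is_derive1_powR (-1) t0) hc.
have -> : gg b = (@powR R ^~ (-1)) * ((@powR R ^~ (- (1 + b))) \o (cst 1 - @ln R)).
  by apply/funext.
apply: differentiable_continuous; apply/derivable1_diffP; by case: hm.
Qed.

Lemma FF_cont b t : 0 < b -> 0 < t -> t < expR 1 -> {for t, continuous (FF b)}.
Proof.
move=> b0 t0 te; apply: differentiable_continuous; apply/derivable1_diffP.
by case: (FF_derive b0 t0 te).
Qed.

Lemma gg_ge0 b t : 0 <= gg b t.
Proof. by rewrite /gg mulr_ge0 // powR_ge0. Qed.

Lemma measurable_gg b : measurable_fun setT (gg b).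
Proof.
have -> : gg b = (fun t => t `^ (-1)) \* ((@powR R ^~ (- (1 + b))) \o (fun t => 1 - ln t)) by [].
apply: measurable_funM; first exact: measurable_powR.
apply: measurableT_comp; first exact: measurable_powR.
by apply: measurable_funB => //; exact: measurable_ln.
Qed.

Lemma lt1e : (1 : R) < expR (1 : R).
Proof. by rewrite -expR0 ltr_expR. Qed.

Lemma FTC_gg (b a : R) : 0 < b -> 0 < a -> a < 1 ->
  (\int[mu]_(x in `[a, 1%R]) (gg b x)%:E = (FF b 1)%:E - (FF b a)%:E)%E.
Proof.
move=> b0 a0 a1; apply: continuous_FTC2 => //.
- apply: continuous_in_subspaceT => x; rewrite inE /= in_itv /= => /andP[ax x1].
  apply: gg_cont; first exact: lt_le_trans ax.
  exact: le_lt_trans x1 lt1e.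
- split.
  + move=> x; rewrite in_itv /= => /andP[ax x1].
    by case: (FF_derive b0 (lt_trans a0 ax) (lt_trans x1 lt1e)).
  + apply: cvg_at_right_filter; exact: FF_cont b0 a0 (lt_trans a1 lt1e).
  + apply: cvg_at_left_filter; exact: FF_cont b0 ltr01 lt1e.
- move=> x; rewrite in_itv /= => /andP[ax x1].
  have hd := FF_derive b0 (lt_trans a0 ax) (lt_trans x1 lt1e).
  by rewrite derive1E; case: hd.
Qed.

Lemma int_gg_itv (b a : R) : 0 < b -> 0 < a -> a < 1 ->
  (\int[mu]_(x in `[a, 1%R]) (gg b x)%:E <= (b^-1)%:E)%E.
Proof.
move=> b0 a0 a1; rewrite FTC_gg // /FF ln1 subr0 powR1 mulr1 lee_fin.
by rewrite lerBlDr lerDl mulr_ge0 // ?invr_ge0 ?(ltW b0) // powR_ge0.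
Qed.

Lemma int_gg (b : R) : 0 < b ->
  (\int[mu]_(x in `]0%R, 1%R]) (gg b x)%:E <= (b^-1)%:E)%E.
Proof.
move=> b0.
pose S := fun n : nat => (`[(n.+2%:R)^-1, 1%R]%classic : set R).
have US : \bigcup_n S n = `]0, 1%R]%classic.
  apply/seteqP; split => x.
    move=> [n _]; rewrite /S /= !in_itv /= => /andP[h1 ->]; rewrite andbT.
    by apply: lt_le_trans h1; rewrite invr_gt0 ltr0n.
  rewrite /= in_itv /= => /andP[x0 x1]; exists (truncn (x^-1)) => //.
  rewrite /S /= in_itv /= x1 andbT.
  rewrite -(invrK x) lef_pV2 ?posrE ?invr_gt0 ?ltr0n //.
  apply: ltW; apply: (lt_le_trans (truncnS_gt _)); rewrite ler_nat invrK; exact: leqnSn.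
have nd : nondecreasing_seq S.
  move=> m n mn; rewrite subsetEset => x; rewrite /S /= !in_itv /= => /andP[h1 ->].
  rewrite andbT; apply: le_trans h1; rewrite lef_pV2 ?posrE ?ltr0n // ler_nat; exact: mn.
have mS : forall n, measurable (S n) by move=> n; exact: measurable_itv.
have mf : forall n, measurable_fun (S n) (fun x => (gg b x)%:E).
  by move=> n; apply/measurable_EFinP; apply: measurable_funS (measurable_gg b).
have f0 : forall n x, S n x -> (0 <= (gg b x)%:E)%E by move=> n x _; rewrite lee_fin gg_ge0.
have := ge0_nondecreasing_set_cvg_integral (mu:=mu) nd mS mf f0.
rewrite US => /cvg_lim <- //.
apply: lime_le.
  by apply/cvg_ex; eexists; exact: (ge0_nondecreasing_set_cvg_integral (mu:=mu) nd mS mf f0).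
apply: nearW => n; apply: int_gg_itv => //.
by rewrite invf_lt1 ?ltr0n // ltr1n.
Qed.

End S2.
Section S3.
Variable R : realType.
Local Notation mu := (@lebesgue_measure R).
Implicit Types (p : R -> \bar R) (f : R -> R).

Lemma indE (A : set R) : ind A = \1_A.
Proof.
apply/funext => x; rewrite /ind /indic; case: (asboolP (A x)) => h.
  by rewrite mem_set.
by rewrite memNset.
Qed.

Definition kk (b t : R) : R := t `^ (- (1/2)) * (1 - ln t) `^ (- ((1 + b) / 2)).

Lemma K2E (b t : R) : K2 b t = \1_(`]0%R, 1%R[%classic) t * kk b t.
Proof.
rewrite /K2 /indic; case: ifPn => h.
  rewrite mem_set ?mul1r; last by rewrite /= in_itv /=.
  move: h => /andP[t0 t1]; rewrite /kk; congr (_ * _); congr (_ `^ _).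
  all: try by rewrite div1r.
  rewrite (@lnM _ (expR 1) t^-1) ?posrE ?expR_gt0 ?invr_gt0 //= expRK (@lnV _ t) ?posrE //.
by rewrite memNset ?mul0r //= in_itv /=; exact/negP.
Qed.

Lemma K2_out (b t : R) : ~~ ((0 < t) && (t < 1)) -> K2 b t = 0.
Proof. by rewrite /K2 => /negbTE ->. Qed.

Lemma K2_ge0 (b t : R) : 0 <= K2 b t.
Proof. by rewrite /K2; case: ifP => // _; rewrite mulr_ge0 // powR_ge0. Qed.

Lemma powR_sq (a s : R) : (a `^ s) ^+ 2 = a `^ (s * 2).
Proof. by rewrite powRrM -powR_mulrn // powR_ge0. Qed.

Lemma K2sq (b t : R) : 0 < t -> t < 1 -> K2 b t ^+ 2 = gg b t.
Proof.
move=> t0 t1; rewrite K2E /indic mem_set ?mul1r; last by rewrite /= in_itv /= t0 t1.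
rewrite /kk /gg exprMn !powR_sq; congr (_ `^ _ * _ `^ _).
- by field.
- by field.
Qed.

Lemma measurable_K2 (b : R) : measurable_fun setT (K2 b).
Proof.
have -> : K2 b = (\1_(`]0%R, 1%R[%classic) : R -> R) \* kk b.
  by apply/funext => t; rewrite K2E.
apply: measurable_funM; first exact: measurable_indic.
have -> : kk b = (fun t => t `^ (- (1/2))) \* ((@powR R ^~ (- ((1 + b) / 2))) \o (fun t => 1 - ln t)) by [].
apply: measurable_funM; first exact: measurable_powR.
apply: measurableT_comp; first exact: measurable_powR.
by apply: measurable_funB => //; exact: measurable_ln.
Qed.

Lemma measurable_pfin p : is_exponent p -> measurable [set x | (p x < +oo)%E].
Proof.
move=> [pm p1].
have := pm measurableT _ (emeasurable_itv (R:=R) `]-oo%E, +oo%E[).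
rewrite setTI; congr measurable; apply/seteqP; split => x /=; rewrite in_itv /=.
  by move=> /andP[].
move=> ->; rewrite andbT; apply: lt_le_trans (p1 x); exact: ltNyr.
Qed.

End S3.
Section S4.
Variable R : realType.
Local Notation mu := (@lebesgue_measure R).
Implicit Types (p : R -> \bar R) (f : R -> R).

Lemma num_bound (b : R) p f : 0 < b -> is_exponent p ->
  (forall y, 0 <= y <= 1 -> p y = 2%:E) -> measurable_fun setT f ->
  (forall y, `|f y| <= K2 b y) -> (modular p f (1 + b^-1) <= 1)%E.
Proof.
move=> b0 pe p2 mf fK.
set lam := 1 + b^-1.
have lam0 : 0 < lam by rewrite /lam addr_gt0 // invr_gt0.
have fout y : ~~ ((0 < y) && (y < 1)) -> f y = 0.
  move=> h; apply/eqP; rewrite -normr_le0; have := fK y; by rewrite K2_out.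
have pin y : 0 < y -> y < 1 -> p y = 2%:E by move=> y0 y1; apply: p2; rewrite !ltW.
rewrite /modular.
rewrite (_ : (fun x => _) = cst 0%E); last first.
  apply/funext => x; case: ifPn => // /eqP px.
  case: (boolP ((0 < x) && (x < 1))) => [/andP[x0 x1]|h]; first by rewrite pin in px.
  by rewrite fout // normr0 mul0r.
rewrite ess_sup_cst ?muT_gt0 // adde0.
set D := [set x | (p x < +oo)%E].
have mD : measurable D := measurable_pfin pe.
rewrite (@eq_integral _ _ _ mu _ (fun x => (((`|f x| / lam) ^+ 2))%:E)); last first.
  move=> x; rewrite inE /= => px; congr EFin.
  case: (boolP ((0 < x) && (x < 1))) => [/andP[x0 x1]|h].
    by rewrite pin //= powR_mulrn // divr_ge0 // ltW.
  rewrite fout // normr0 mul0r expr0n /= powR0 //.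
  by apply/eqP => h0; have := fine_ge1 pe px; rewrite h0 ler10.
set c := (lam ^+ 2)^-1.
set hg := (fun x => (gg b x)%:E) \_ `]0%R, 1%R]%classic.
have hg0 x : (0 <= hg x)%E.
  by rewrite /hg patchE; case: ifP => // _; rewrite lee_fin gg_ge0.
have mhg : measurable_fun setT hg.
  apply/(measurable_restrictT _ _).1 => //; apply/measurable_EFinP.
  exact: measurable_funS (measurable_gg b).
apply: (@le_trans _ _ (\int[mu]_(x in D) (c%:E * hg x))%E).
  apply: ge0_le_integral => //.
  - by move=> x _; rewrite lee_fin sqr_ge0.
  - apply/measurable_EFinP; apply: measurable_funX; apply: measurable_funM.
      by apply: measurableT_comp => //; exact: measurable_funS mf.
    exact: measurable_cst.
  - apply: emeasurable_funM; first exact: measurable_cst.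
    exact: measurable_funS mhg.
  - move=> x _; case: (boolP ((0 < x) && (x < 1))) => [/andP[x0 x1]|h].
      rewrite /hg patchE mem_set; last by rewrite /= in_itv /= x0 ltW.
      rewrite -EFinM lee_fin -(K2sq b x0 x1) /c expr_div_n.
      rewrite [X in _ <= X]mulrC; apply: ler_wpM2r; first by rewrite invr_ge0 sqr_ge0.
      by rewrite ler_sqr ?nnegrE ?K2_ge0.
    by rewrite fout // normr0 mul0r expr0n /= mule_ge0 // lee_fin invr_ge0 sqr_ge0.
apply: (@le_trans _ _ (\int[mu]_(x in setT) (c%:E * hg x))%E).
  apply: ge0_subset_integral => //.
  - apply: emeasurable_funM; first exact: measurable_cst.
    exact: mhg.
  - by move=> x _; rewrite mule_ge0 // lee_fin invr_ge0 sqr_ge0.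
rewrite ge0_integralZl_EFin //; last by rewrite invr_ge0 sqr_ge0.
rewrite -integral_mkcond.
apply: (@le_trans _ _ (c%:E * (b^-1)%:E))%E.
  by rewrite lee_pmul2l ?int_gg // lte_fin invr_gt0 exprn_gt0.
rewrite -EFinM lee_fin /c ler_pdivrMl ?exprn_gt0 // mulr1 /lam.
have a0 : 0 <= b^-1 by rewrite invr_ge0 ltW.
move: a0; set a := b^-1 => a0; nra.
Qed.

End S4.
Section S5.
Variable R : realType.
Local Notation mu := (@lebesgue_measure R).
Implicit Types (p : R -> \bar R) (f : R -> R).

Lemma indic_ge0 (A : set R) (x : R) : 0 <= \1_A x :> R.
Proof. by rewrite /indic; case: (x \in A). Qed.

Lemma den_bound p (A : set R) (y0 : R) : is_exponent p -> measurable A ->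
  (`[y0, y0 + 2]%classic `<=` A) -> (((1/2 : R))%:E <= vnorm p (ind A))%E.
Proof.
move=> pe mA BA; apply: vnorm_ge => l l0 lh.
have l1 : l < 1 by apply: lt_trans lh _; rewrite ltr_pdivrMr // mul1r ltr1n.
have il1 : 1 < l^-1 by rewrite invf_gt1.
set B := (`[y0, y0 + 2]%classic : set R).
have mB : measurable B by exact: measurable_itv.
set D := [set x | (p x < +oo)%E].
have mD : measurable D := measurable_pfin pe.
have muB : mu B = 2%:E by rewrite /B lebesgue_measure_itv /= lte_fin ltrDl ltr0n -EFinB addrAC subrr add0r.
rewrite /modular.
set h := (fun x => if p x == +oo%E then (`|ind A x| / l)%:E else 0%E).
set I := (\int[mu]_(x in D) _)%E.
have I0 : (0 <= I)%E by apply: integral_ge0 => x _; rewrite lee_fin powR_ge0.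
have h0 x : (0 <= h x)%E by rewrite /h; case: ifP => // _; rewrite lee_fin divr_ge0 // ltW.
have E0 : (0 <= ess_sup mu h)%E.
  apply: ess_sup_gee; first exact: muT_gt0.
  by apply: nearW => x; exact: h0.
have [NB|NB] := eqVneq (mu (B `&` ~` D)) 0%E.
  (* the integral part is large *)
  have mBD : (2%:E <= mu (B `&` D))%E.
    have BU : B = (B `&` D) `|` (B `&` ~` D) by rewrite -setIUr setUv setIT.
    rewrite -muB {1}BU.
    apply: le_trans (measureU2 _ _ _) _.
    - by apply: measurableI.
    - by apply: measurableI => //; exact: measurableC.
    rewrite -[X in (_ <= X)%E]adde0; apply: leeD2l; rewrite le_eqVlt; apply/orP; left; apply/eqP; exact: NB.
  apply: (@lt_le_trans _ _ I); last by rewrite leeDl.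
  rewrite /I (@eq_integral _ _ _ mu _ (fun x => (\1_A x * l^-1 `^ fine (p x))%:E)); last first.
    move=> x; rewrite inE /= => px; congr EFin; rewrite indE /indic.
    case: (x \in A); first by rewrite normr1 div1r mul1r.
    rewrite normr0 mul0r mul0r powR0 //.
    by apply/eqP => h1; have := fine_ge1 pe px; rewrite h1 ler10.
  apply: (@lt_le_trans _ _ (\int[mu]_(x in D) (l^-1 * \1_B x)%:E)%E).
    rewrite (@eq_integral _ _ _ mu _ (fun x => (l^-1)%:E * (\1_B x)%:E)%E); last by move=> x _; rewrite EFinM.
    have s1 : forall x, D x -> (0 <= (\1_B x : R)%:E)%E by move=> x Dx; rewrite lee_fin; exact: indic_ge0.
    have s2 : measurable_fun D (fun x => (\1_B x : R)%:E) by apply/measurable_EFinP; exact: measurable_indic.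
    have s3 : 0 <= l^-1 by rewrite invr_ge0 ltW.
    rewrite (ge0_integralZl_EFin mu mD s1 s2 s3).
    rewrite integral_indic //.
    apply: (@lt_le_trans _ _ ((l^-1)%:E * 2%:E))%E; last by rewrite lee_pmul2l // lte_fin invr_gt0.
    by rewrite -EFinM lte_fin; apply: (lt_le_trans il1); rewrite ler_peMr // ?ler1n // ltW // (lt_trans ltr01).
  apply: ge0_le_integral => //.
  - by move=> x _; rewrite lee_fin mulr_ge0 // ?invr_ge0 ?ltW //; exact: indic_ge0.
  - by apply/measurable_EFinP; apply: measurable_funM => //; exact: measurable_indic.
  - apply/measurable_EFinP; apply: measurable_funM; first exact: measurable_indic.
    apply: measurableT_comp; first exact: measurable_powRr.
    apply: measurableT_comp; first exact: fine_measurable.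
    by case: pe => pm _; exact: measurable_funS pm.
  - move=> x; rewrite /= => px; rewrite lee_fin /indic.
    case: (boolP (x \in B)) => xB; last by rewrite mulr0 mulr_ge0 ?ler0n ?powR_ge0.
    move/set_mem: xB => xB; rewrite (mem_set (BA _ xB)).
    rewrite !mulr1 mul1r; apply: le1r_powR; first exact: ltW.
    exact: fine_ge1 pe px.
(* the ess_sup part is large *)
apply: (@lt_le_trans _ _ (ess_sup mu h)); last by rewrite leeDr.
rewrite ltNge; apply/negP => /ess_supP [N [mN muN sN]].
move/eqP: NB; apply.
apply/eqP; rewrite eq_le measure_ge0 andbT -muN.
apply: le_measure; rewrite ?inE; [exact: measurableI (measurableC mD)|exact: mN|].
move=> x [xB xD]; apply: sN => /=; rewrite /h.
have -> : p x = +oo%E.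
  by move: xD; rewrite /D /=; case: (p x) => //= r; rewrite ltey.
rewrite eqxx lee_fin indE /indic mem_set; last exact: BA.
by rewrite normr1 div1r; apply/negP; rewrite -ltNge.
Qed.

End S5.
Section S6.
Variable R : realType.
Local Notation mu := (@lebesgue_measure R).
Implicit Types (p : R -> \bar R) (f : R -> R).

Lemma ind01 (A : set R) y : ind A y = 0 \/ ind A y = 1.
Proof. by rewrite /ind; case: ifP; [right|left]. Qed.

Lemma ind_ge0 (A : set R) y : 0 <= ind A y.
Proof. by case: (ind01 A y) => ->. Qed.

Lemma ind_le1 (A : set R) y : ind A y <= 1.
Proof. by case: (ind01 A y) => ->. Qed.

Lemma ind_neq0 (A : set R) y : ind A y != 0 -> A y.
Proof. by rewrite /ind; case: (asboolP (A y)) => //; rewrite eqxx. Qed.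

Lemma measurable_ind (A : set R) : measurable A -> measurable_fun setT (ind A).
Proof. by move=> mA; rewrite indE; exact: measurable_indic. Qed.

Definition fker (b x z : R) (S : set R) (y : R) : R :=
  ((Kker b x y - Kker b z y) * ind S y)%R.

Lemma K1diff (x z y : R) : `|K1 (x - y) - K1 (z - y)| <= 1.
Proof.
rewrite /K1; case: (ind01 `[2, 3] (x - y)) => ->; case: (ind01 `[2, 3] (z - y)) => ->;
by rewrite ?subrr ?normr0 ?sub0r ?subr0 ?normrN ?normr1 ?ler01.
Qed.

Lemma fker_le b x z S y : `|fker b x z S y| <= K2 b y.
Proof.
rewrite /fker /Kker -mulrBl !normrM (ger0_norm (K2_ge0 _ _)).
have ha := K1diff x z y.
have hi : `|ind S y| <= 1 by rewrite ger0_norm ?ind_ge0 ?ind_le1.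
rewrite -[X in _ <= X]mulr1; apply: ler_pM => //.
- by rewrite mulr_ge0 ?K2_ge0.
- rewrite -[X in _ <= X]mul1r; apply: ler_pM => //; exact: K2_ge0.
Qed.

Lemma fker_neq0 b x z S y : fker b x z S y != 0 ->
  [/\ S y, 0 < y < 1 & (`[2, 3]%classic (x - y) \/ `[2, 3]%classic (z - y))].
Proof.
rewrite /fker /Kker -mulrBl !mulf_eq0 !negb_or => /andP[/andP[hk h2] hi].
split; first exact: ind_neq0.
- by case: (boolP ((0 < y) && (y < 1))) => // h; move: h2; rewrite K2_out ?eqxx.
- move: hk; rewrite /K1; case: (boolP (ind `[2, 3] (x - y) != 0)) => [/ind_neq0 h|]; first by left.
  rewrite negbK => /eqP ->; rewrite sub0r oppr_eq0 => /ind_neq0; by right.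
Qed.

Lemma measurable_fker b x z S : measurable S -> measurable_fun setT (fker b x z S).
Proof.
move=> mS; rewrite /fker /Kker.
have hK : forall w : R, measurable_fun setT (fun y : R => K1 (w - y) * K2 b y).
  move=> w; apply: measurable_funM; last exact: measurable_K2.
  apply: measurableT_comp; first by apply: measurable_ind; exact: measurable_itv.
  by apply: measurable_funB => //; exact: measurable_cst.
apply: measurable_funM; last exact: measurable_ind.
exact: measurable_funB (hK x) (hK z).
Qed.

End S6.
Section S7.
Variable R : realType.
Implicit Types (p : R -> \bar R) (f : R -> R).

Lemma dilP (m c l y : R) : dil m c l y <-> (c - m * l / 2 <= y <= c + m * l / 2).
Proof. by rewrite /dil /cube /= in_itv. Qed.

Lemma pow2_m1 (m : nat) : (2 : R) ^+ m <= 2 * 2 ^+ m.-1.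
Proof. by case: m => [|m] /=; rewrite ?expr0 ?mulr1 ?ler1n // exprS. Qed.

Lemma pow2_ge1 (m : nat) : (1 : R) <= 2 ^+ m.
Proof. by rewrite exprn_ege1 // ler1n. Qed.

Lemma geom (c l w y : R) (m : nat) : 0 < l -> dil (1/2) c l w -> 2 <= w - y <= 3 ->
  dil (2 ^+ m) c l y -> ~ dil (2 ^+ m.-1) c l y ->
  2 ^+ m * l < 24 /\ (`[y, y + 2]%classic `<=` dil (2 ^+ m) c l).
Proof.
move=> l0 /dilP/andP[w1 w2] /andP[wy1 wy2] /dilP/andP[y1 y2] ny.
have k1 := pow2_ge1 m.-1; have km := pow2_m1 m; have m1 := pow2_ge1 m.
set k := (2 : R) ^+ m.-1 in k1 km ny; set M := (2 : R) ^+ m in km m1 y1 y2 *.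
have kl : l <= k * l by rewrite ler_peMl // ltW.
have Ml : l <= M * l by rewrite ler_peMl // ltW.
have Mk : M * l <= 2 * (k * l) by rewrite mulrA ler_wpM2r // ltW.
split.
  have : ~~ (c - k * l / 2 <= y <= c + k * l / 2) by apply/negP => h; apply: ny; exact/dilP.
  rewrite negb_and -!ltNge => /orP[h|h].
    move: w1 w2; lra.
  move: w1 w2; lra.
move=> t; rewrite /= in_itv /= => /andP[t1 t2]; apply/dilP.
move: w1 w2; lra.
Qed.

End S7.
Section S8.
Variable R : realType.
Local Notation mu := (@lebesgue_measure R).
Implicit Types (p : R -> \bar R) (f : R -> R).

Definition Tm (l : R) (m : nat) : R := if 2 ^+ m * l < 24 then 2 ^+ m * l else 0.

Lemma Tm_ge0 l m : 0 < l -> 0 <= Tm l m.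
Proof. by move=> l0; rewrite /Tm; case: ifP => // _; rewrite mulr_ge0 // ?exprn_ge0 // ltW. Qed.

Lemma inv_fine_le2 (v : \bar R) : ((1/2 : R)%:E <= v)%E -> (fine v)^-1 <= 2.
Proof.
case: v => [v| |] //=.
- rewrite lee_fin => hv; have v0 : 0 < v by apply: lt_le_trans hv; rewrite divr_gt0.
  rewrite -[2 in X in _ <= X]invrK lef_pV2 ?posrE ?invr_gt0 //.
  by rewrite -div1r.
- by rewrite invr0 ler0n.
Qed.

Lemma term_bound (b : R) r (c l x z : R) (m : nat) : 0 < b -> is_exponent r ->
  (forall y, 0 <= y <= 1 -> r y = 2%:E) -> 0 < l ->
  dil (1/2) c l x -> dil (1/2) c l z ->
  (((2 ^+ m * l)%:E * vnorm r (fun y => ((Kker b x y - Kker b z y) *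
      ind (dil (2 ^+ m) c l `\` dil (2 ^+ m.-1) c l) y)%R)
   * ((fine (vnorm r (ind (dil (2 ^+ m) c l))))^-1)%:E) <= (Tm l m * (2 * (1 + b^-1)))%:E)%E.
Proof.
move=> b0 pe r2 l0 hx hz.
set S := (dil (2 ^+ m) c l `\` dil (2 ^+ m.-1) c l).
have mdil : forall k : R, measurable (dil k c l) by move=> k; exact: measurable_itv.
have mS : measurable S by apply: measurableD.
change (fun y => _) with (fker b x z S).
have lam0 : 0 < 1 + b^-1 by rewrite addr_gt0 // invr_gt0.
have Tm0 := Tm_ge0 m l0.
case: (pselect (exists y, fker b x z S y != 0)) => [[y hy]|hn]; last first.
  rewrite vnorm0 //; last by move=> y; apply/eqP; apply: contra_notT hn => h; exists y.
  by rewrite mule0 mul0e lee_fin mulr_ge0 // mulr_ge0 // ltW.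
have [[Sy Sny] /andP[y0 y1] hw] := fker_neq0 hy.
have [w [hwd hwy]] : exists w, dil (1/2) c l w /\ 2 <= w - y <= 3.
  by case: hw => h; [exists x|exists z]; split => //; move: h; rewrite /= in_itv.
have [hM hsub] := geom l0 hwd hwy Sy Sny.
have hnum : (vnorm r (fker b x z S) <= (1 + b^-1)%:E)%E.
  apply: vnorm_le => //; apply: num_bound => //.
    exact: measurable_fker.
  by move=> t; exact: fker_le.
have hden := inv_fine_le2 (den_bound pe (mdil _) hsub).
rewrite /Tm hM.
have -> : (2 ^+ m * l * (2 * (1 + b^-1)))%:E = (((2 ^+ m * l)%:E * (1 + b^-1)%:E) * 2%:E)%E
  by rewrite -!EFinM; congr EFin; ring.
have pm0 : 0 <= 2 ^+ m * l by rewrite mulr_ge0 ?exprn_ge0 // ltW.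
apply: lee_pmul => //.
- by rewrite mule_ge0 // vnorm_ge0.
- by rewrite lee_fin invr_ge0 fine_ge0 // vnorm_ge0.
- by apply: lee_pmul => //; exact: vnorm_ge0.
Qed.

End S8.
Section S9.
Variable R : realType.

Lemma Tm_sum (l : R) n : 0 < l -> \sum_(1 <= m < n) Tm l m <= 48.
Proof.
move=> l0.
have H : forall k, \sum_(1 <= m < k.+1) Tm l m <= 2 ^+ k.+1 * l /\ \sum_(1 <= m < k.+1) Tm l m <= 48.
  elim => [|k [IH1 IH2]].
    rewrite big_geq // expr1; split; last by [].
    by rewrite mulr_ge0 // ltW.
  have e : (2:R) ^+ k.+2 * l = 2 * (2 ^+ k.+1 * l) by rewrite exprS mulrA.
  rewrite big_nat_recr //= e.
  set s := \sum_(1 <= m < k.+1) Tm l m in IH1 IH2 *.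
  have a0 : 0 <= 2 ^+ k.+1 * l by rewrite mulr_ge0 ?exprn_ge0 // ltW.
  move: IH1 IH2 a0; set a := 2 ^+ k.+1 * l => IH1 IH2 a0.
  rewrite /Tm -/a; case: ifP => h; first by split; lra.
  by split; lra.
case: n => [|n]; first by rewrite big_geq.
exact: (H n).2.
Qed.

End S9.

Unset Implicit Arguments.

Theorem mainTheorem17 (R : realType) (beta : R) (r : R -> \bar R) :
  0 < beta ->
  log_holder r ->
  (forall x : R, 0 <= x <= 1 -> r x = 2%:E) ->
  (1 < ess_inf_itv r 0 16)%E ->
  in_H r (Kker beta).
Proof.
move=> b0 [pe _] r2 _.
set K := 2 * (1 + beta^-1).
have K0 : 0 <= K by rewrite mulr_ge0 // addr_ge0 // invr_ge0 ltW.
exists (48 * K) => c l l0 x z hx hz.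
apply: le_trans (@lee_nneseries _ _ (fun m => (Tm l m * K)%:E) _ _ _ _) _.
- move=> m _ _; rewrite mule_ge0 // ?mule_ge0 // ?lee_fin ?vnorm_ge0 //.
    by rewrite mulr_ge0 ?exprn_ge0 // ltW.
  by rewrite invr_ge0 fine_ge0 // vnorm_ge0.
- by move=> m _; exact: term_bound.
apply: lime_le.
  by apply: is_cvg_nneseries => m _ _; rewrite lee_fin mulr_ge0 // Tm_ge0.
apply: nearW => n /=; rewrite sumEFin lee_fin -mulr_suml ler_wpM2r //.
exact: Tm_sum.
Qed.
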